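(* Let $M=\begin{pmatrix} a&b\\ 0&d\end{pmatrix}$ with $a,d$ having generalized core-EP inverses. If $a^{\pi}b=0$, then $M$ has a generalized core-EP inverse in $M_2(\mathcal{A})$ and $M^{\mathrm{gcEP}}=\begin{pmatrix} a^{\mathrm{gcEP}}&-a^{\mathrm{gcEP}}bd^{\mathrm{gcEP}}\\ 0&d^{\mathrm{gcEP}}\end{pmatrix}$.
   Context: $\mathcal{A}$ is a Banach algebra (a complex Banach *-algebra with identity, as in the whole paper), $M_2(\mathcal{A})$ the $2\times2$ matrices over $\mathcal{A}$. The generalized core-EP inverse of $a$ is the unique $x$ with $ax^2=x$, $(ax)^*=ax$, $\lim_{n\to\infty}\|a^n-xa^{n+1}\|^{1/n}=0$, denoted $a^{\mathrm{gcEP}}$. $a^{\pi}=1-aa^d$, with $a^d$ the generalized Drazin inverse. *)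

(* Defs.v *)
From HB Require Import structures.
From mathcomp Require Import all_boot all_order all_algebra.
From mathcomp Require Import complex.
From mathcomp Require Import all_classical all_reals all_analysis.

Set Implicit Arguments.
Unset Strict Implicit.
Unset Printing Implicit Defensive.

Import Order.TTheory GRing.Theory Num.Theory.
Import numFieldNormedType.Exports.
Local Open Scope ring_scope.
Local Open Scope classical_set_scope.

Definition is_banach_star_algebra (R : realType) (A : unitAlgType R[i])
    (nrm : A -> R) (star : A -> A) : Prop :=
  [/\
      [/\ (forall x, 0 <= nrm x),
          (forall x, nrm x = 0 -> x = 0),
          (forall x y, nrm (x + y) <= nrm x + nrm y) &
          (forall (c : R[i]) x, ((nrm (c *: x))%:C)%C = `|c| * ((nrm x)%:C)%C)],
      (forall x y, nrm (x * y) <= nrm x * nrm y),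
      (forall u : nat -> A,
          (forall e : R, 0 < e -> exists N : nat, forall m n : nat,
              (N <= m)%N -> (N <= n)%N -> nrm (u m - u n) < e) ->
          exists l : A, forall e : R, 0 < e -> exists N : nat, forall n : nat,
              (N <= n)%N -> nrm (u n - l) < e) &
      [/\ (forall x y, star (x + y) = star x + star y),
          (forall (c : R[i]) x, star (c *: x) = (c^*)%C *: star x),
          (forall x y, star (x * y) = star y * star x) &
          (forall x, star (star x) = x)]].

Definition is_gcEP (R : realType) (T : pzRingType) (nrm : T -> R)
    (star : T -> T) (a x : T) : Prop :=
  [/\ a * x ^+ 2 = x,
      star (a * x) = a * x &
      (fun n : nat => powR (nrm (a ^+ n - x * a ^+ n.+1)) (n%:R^-1))
        @ \oo --> (0 : R)].

(** Quasinilpotent: spectrum is {0}, i.e. [lambda - q] invertible for every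
    nonzero complex [lambda]. *)
Definition quasinilpotent (R : realType) (A : unitAlgType R[i]) (q : A) : Prop :=
  forall lambda : R[i], lambda != 0 -> (lambda%:A - q) \is a GRing.unit.

Definition is_gDrazin (R : realType) (A : unitAlgType R[i]) (a x : A) : Prop :=
  [/\ x * a * x = x, a * x = x * a & quasinilpotent (a - a ^+ 2 * x)].

Definition mx2 (T : Type) (p q r s : T) : 'M[T]_2 :=
  \matrix_(i < 2, j < 2)
     if (i : nat) == 0%N then (if (j : nat) == 0%N then p else q)
     else (if (j : nat) == 0%N then r else s).

Definition mxstar (T : Type) (star : T -> T) (M : 'M[T]_2) : 'M[T]_2 :=
  \matrix_(i < 2, j < 2) star (M j i).

(** Norm on M_2(A): maximal row sum of entry norms (a Banach algebra norm;
    any two Banach algebra norms on M_2(A) are equivalent, and the gcEP limit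
    condition does not depend on the choice). *)
Definition mxnorm (R : realType) (T : Type) (nrm : T -> R) (M : 'M[T]_2) : R :=
  \big[Num.max/0]_(i < 2) \sum_(j < 2) nrm (M i j).

(* Main.v *)
Require Import Defs.
From HB Require Import structures.
From mathcomp Require Import all_boot all_order all_algebra.
From mathcomp Require Import complex.
From mathcomp Require Import all_classical all_reals all_analysis.
Import Order.TTheory GRing.Theory Num.Theory.
Import numFieldNormedType.Exports.
Local Open Scope ring_scope.
Local Open Scope classical_set_scope.

Definition rdecay {R : realType} (u : nat -> R) :=
  forall e : R, 0 < e -> exists N, forall n, (N <= n)%N -> u n <= e ^+ n.

Lemma root_to_D (R : realType) (u : nat -> R) :
  (forall n, 0 <= u n) ->
  (fun n : nat => powR (u n) (n%:R^-1)) @ \oo --> (0 : R) -> rdecay u.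
Proof.
move=> u0 /cvgrPdist_lt H e e0.
have [N _ HN] := H e e0.
exists N.+1 => n Nn.
have n0 : (0 < n)%N by apply: leq_trans Nn.
have := HN n (ltnW Nn); rewrite /= sub0r normrN ger0_norm ?powR_ge0 // => lt.
have -> : u n = powR (powR (u n) n%:R^-1) n%:R.
  rewrite -powRrM mulVf ?powRr1 // pnatr_eq0 -lt0n //.
rewrite powR_mulrn ?powR_ge0 //.
by apply: lerXn2r; rewrite ?nnegrE ?powR_ge0 ?ltW.
Qed.

Lemma D_to_root (R : realType) (u : nat -> R) :
  (forall n, 0 <= u n) -> rdecay u ->
  (fun n : nat => powR (u n) (n%:R^-1)) @ \oo --> (0 : R).
Proof.
move=> u0 D; apply/cvgrPdist_lt => e e0.
have e20 : 0 < e / 2 by rewrite divr_gt0.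
have [N HN] := D _ e20.
exists N.+1 => // n /= Nn.
have n0 : (0 < n)%N by apply: leq_trans Nn.
rewrite sub0r normrN ger0_norm ?powR_ge0 //.
apply: (le_lt_trans (y := e / 2)); last by rewrite ltr_pdivrMr // ltr_pMr // ltr1n.
have -> : e / 2 = powR ((e/2) ^+ n) n%:R^-1.
  rewrite -powR_mulrn ?ltW // -powRrM mulfV ?powRr1 ?ltW // pnatr_eq0 -lt0n //.
apply: ge0_ler_powR; [by rewrite invr_ge0 ler0n | by rewrite nnegrE | by rewrite nnegrE exprn_ge0 // ltW | exact: HN (ltnW Nn)].
Qed.

Lemma D_comb (R : realType) (u v w : nat -> R) (C : R) :
  0 <= C -> (forall n, u n <= v n + C * w n) -> rdecay v -> rdecay w -> rdecay u.
Proof.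
move=> C0 uvw Dv Dw e e0.
have C1 : 0 < 1 + C by rewrite ltr_pwDl.
have e'0 : 0 < e / (1 + C) by rewrite divr_gt0.
have [N1 H1] := Dv _ e'0; have [N2 H2] := Dw _ e'0.
exists (maxn (maxn N1 N2) 1) => n; rewrite !geq_max => /andP[/andP[n1 n2] n0].
apply: (le_trans (uvw n)).
apply: (le_trans (y := (1 + C) * (e / (1 + C)) ^+ n)).
  rewrite mulrDl mul1r lerD ?H1 //.
  by rewrite ler_wpM2l // H2.
have -> : e ^+ n = (1 + C) ^+ n * (e / (1 + C)) ^+ n.
  by rewrite -exprMn mulrCA divff ?mulr1 // gt_eqF.
rewrite ler_wpM2r ?exprn_ge0 ?(ltW e'0) // ler_eXnr // lerDl //.
Qed.

Lemma nrm_exp (R : realType) (T : pzRingType) (nrm : T -> R)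
  (n0 : forall x, 0 <= nrm x) (nM : forall x y, nrm (x * y) <= nrm x * nrm y)
  (y : T) k : nrm (y ^+ k.+1) <= nrm y ^+ k.+1.
Proof.
elim: k => [|k IH]; first by rewrite !expr1.
rewrite exprS [X in _ <= X]exprS.
apply: (le_trans (nM _ _)); exact: ler_wpM2l.
Qed.

Lemma vanish (R : realType) (T : pzRingType) (nrm : T -> R)
  (n0 : forall x, 0 <= nrm x) (nM : forall x y, nrm (x * y) <= nrm x * nrm y)
  (n00 : forall x, nrm x = 0 -> x = 0)
  (c y : T) (r : nat -> T) :
  (forall k, c = r k * y ^+ k.+1) -> rdecay (fun k => nrm (r k)) -> c = 0.
Proof.
move=> cr D; apply: n00; apply/eqP; rewrite eq_le n0 andbT.
set q := nrm y + 1.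
have q0 : 0 < q by rewrite ltr_wpDl.
have e0 : 0 < (2 * q)^-1 by rewrite invr_gt0 mulr_gt0.
have [N HN] := D _ e0.
have bnd : forall k, (N <= k)%N -> nrm c * 2 ^+ k <= q.
  move=> k Nk.
  have h1 : nrm c <= (2 * q)^-1 ^+ k * q ^+ k.+1.
    rewrite {1}(cr k); apply: (le_trans (nM _ _)).
    apply: ler_pM; rewrite ?n0 ?HN //.
    apply: (le_trans (@nrm_exp _ _ nrm n0 nM y k)).
    apply: lerXn2r; rewrite ?nnegrE ?n0 ?(ltW q0) // lerDl //.
  have E : (2 * q)^-1 ^+ k * q ^+ k.+1 = q / 2 ^+ k.
    rewrite exprVn exprMn exprS invfM mulrC -!mulrA; congr (_ * _).
    by rewrite mulrC -mulrA mulVf ?mulr1 // expf_neq0 // gt_eqF.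
  rewrite E in h1; by rewrite -ler_pdivlMr ?exprn_gt0.
rewrite leNgt; apply/negP => c0.
have qc0 : 0 <= q / nrm c by rewrite divr_ge0 ?ltW.
set M := Num.Def.archi_bound (q / nrm c).
have := bnd (maxn N M.+1) (leq_maxl _ _).
apply/negP; rewrite -ltNge.
rewrite -ltr_pdivrMl // mulrC.
apply: (lt_le_trans (archi_boundP qc0)).
apply: (le_trans (y := (maxn N M.+1)%:R)).
  by rewrite ler_nat leq_max leqnSn orbT.
rewrite -natrX ler_nat; apply: ltnW; exact: ltn_expl.
Qed.

Lemma mx2E (T : Type) (p q r s : T) (i j : 'I_2) :
  mx2 p q r s i j = if (i : nat) == 0%N then (if (j : nat) == 0%N then p else q)
     else (if (j : nat) == 0%N then r else s).
Proof. by rewrite /mx2 mxE. Qed.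

Lemma mx2_mul (T : pzRingType) (p q r s p' q' r' s' : T) :
  mx2 p q r s * mx2 p' q' r' s' =
  mx2 (p * p' + q * r') (p * q' + q * s') (r * p' + s * r') (r * q' + s * s').
Proof.
rewrite -mulmxE; apply/matrixP => i j; rewrite !mxE big_ord_recl big_ord1 !mx2E.
by case: i => [[|[|i]] Hi] //; case: j => [[|[|j]] Hj].
Qed.

Lemma mx2_sub (T : pzRingType) (p q r s p' q' r' s' : T) :
  mx2 p q r s - mx2 p' q' r' s' = mx2 (p - p') (q - q') (r - r') (s - s').
Proof.
apply/matrixP => i j; rewrite /mx2 !mxE.
by case: i => [[|[|i]] Hi] //; case: j => [[|[|j]] Hj].
Qed.

Lemma mxstar_mx2 (T : Type) (star : T -> T) (p q r s : T) :
  mxstar star (mx2 p q r s) = mx2 (star p) (star r) (star q) (star s).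
Proof.
apply/matrixP => i j; rewrite /mxstar /mx2 !mxE.
by case: i => [[|[|i]] Hi] //; case: j => [[|[|j]] Hj].
Qed.

Lemma mxnorm_mx2 (R : realType) (T : Type) (nrm : T -> R) (p q r s : T) :
  mxnorm nrm (mx2 p q r s) = Num.max (nrm p + nrm q) (Num.max (nrm r + nrm s) 0).
Proof.
by rewrite /mxnorm !big_ord_recl !big_ord0 /mx2 !mxE /= !addr0.
Qed.

Fixpoint Bn {T : pzRingType} (a b d : T) (n : nat) : T :=
  if n is m.+1 then a * Bn a b d m + b * d ^+ m else 0.

Lemma mx2_exp (T : pzRingType) (a b d : T) n :
  mx2 a b 0 d ^+ n = mx2 (a ^+ n) (Bn a b d n) 0 (d ^+ n).
Proof.
elim: n => [|n IH].
  rewrite !expr0; apply/matrixP => i j; rewrite /mx2 !mxE.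
  by case: i => [[|[|i]] Hi] //; case: j => [[|[|j]] Hj].
by rewrite exprS IH mx2_mul /= !mul0r !mulr0 !addr0 !add0r -!exprS.
Qed.

Theorem corollary4p8 (R : realType) (A : unitAlgType R[i])
    (nrm : A -> R) (star : A -> A)
    (HA : is_banach_star_algebra nrm star)
    (a b d xa xd : A)
    (Ha : is_gcEP nrm star a xa) (Hd : is_gcEP nrm star d xd)
    (Hpi : exists ad : A, is_gDrazin a ad /\ (1 - a * ad) * b = 0) :
  is_gcEP (mxnorm nrm) (mxstar star) (mx2 a b 0 d)
    (mx2 xa (- (xa * b * xd)) 0 xd).
Proof.
have [[n0 n00 ntri nsc] nM _ [sD sZ sM sS]] := HA.
have [Ha1 Ha2 Ha3] := Ha; have [Hd1 Hd2 Hd3] := Hd.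
have [ad [[ad1 ad2 _] Hb]] := Hpi.
have nrmN : forall x, nrm (- x) = nrm x.
  move=> x; apply: complexI; have := nsc (-1) x.
  by rewrite scaleN1r normrN1 mul1r.
have nrm0 : nrm 0 = 0.
  apply: complexI; have := nsc 0 0.
  by rewrite scale0r normr0 mul0r.
have star0 : star 0 = 0.
  have h := sD 0 0; rewrite addr0 in h.
  by apply: (addrI (star 0)); rewrite addr0 -h.
have ee : a * ad * (a * ad) = a * ad by rewrite -[in RHS]ad1 !mulrA.
have eX : forall k, (a * ad) ^+ k.+1 = a * ad.
  elim=> [|k IH]; first by rewrite expr1.
  by rewrite exprS IH ee.
have ead : a * ad * ad = ad by rewrite ad2 ad1.
have eXad : forall k, (a * ad) ^+ k * ad = ad.
  by case=> [|k]; rewrite ?expr0 ?mul1r // eX ead.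
have P1 : forall k, a ^+ k * ad ^+ k.+1 = ad.
  by move=> k; rewrite exprSr mulrA -exprMn_comm // eXad.
have P2 : forall k, a ^+ k.+1 * ad ^+ k.+1 = a * ad.
  by move=> k; rewrite -exprMn_comm // eX.
have Da : rdecay (fun n => nrm (a ^+ n - xa * a ^+ n.+1)).
  by apply: root_to_D.
have Dd : rdecay (fun n => nrm (d ^+ n - xd * d ^+ n.+1)).
  by apply: root_to_D.
have K : ad = xa * a * ad.
  apply/eqP; rewrite -subr_eq0; apply/eqP.
  apply: (@vanish _ _ nrm n0 nM n00 _ ad _ _ Da) => k.
  by rewrite mulrBl P1 -mulrA -mulrA P2 mulrA.
have bE : b = a * ad * b.
  by apply/eqP; rewrite -subr_eq0 -{1}(mul1r b) -mulrBl Hb.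
have Q1 : a * xa * b = b.
  transitivity (a * xa * (a * ad * b)); first by rewrite -bE.
  transitivity (a * (xa * a * ad) * b); first by rewrite !mulrA.
  by rewrite -K -bE.
have Bfix : forall n, a * ad * Bn a b d n = Bn a b d n.
  elim=> [|n IH] /=; first by rewrite mulr0.
  rewrite mulrDr; congr (_ + _).
    by rewrite -[in RHS]IH !mulrA -(mulrA a ad a) -ad2 !mulrA.
  by rewrite mulrA -bE.
have Bz : forall n, xa * a * Bn a b d n = Bn a b d n.
  move=> n; transitivity (xa * a * (ad * a * Bn a b d n)).
    by rewrite -ad2 Bfix.
  transitivity (xa * a * ad * a * Bn a b d n); first by rewrite !mulrA.
  by rewrite -K -ad2 Bfix.
split.
- rewrite expr2 !mx2_mul !(mul0r, mulr0, addr0, add0r).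
  have A1 : a * xa * xa = xa by rewrite -mulrA -expr2.
  have D1 : d * xd * xd = xd by rewrite -mulrA -expr2.
  by rewrite !mulrDr !mulrN !mulNr !mulrA A1 D1 mulrN !mulrA Q1 subrK.
- rewrite !mx2_mul !(mul0r, mulr0, addr0, add0r).
  by rewrite mulrN !mulrA Q1 addNr mxstar_mx2 star0 Ha2 Hd2.
- have Ediff : forall n, mx2 a b 0 d ^+ n - mx2 xa (- (xa * b * xd)) 0 xd * mx2 a b 0 d ^+ n.+1
     = mx2 (a ^+ n - xa * a ^+ n.+1) (- (xa * b * (d ^+ n - xd * d ^+ n.+1))) 0
           (d ^+ n - xd * d ^+ n.+1).
    move=> n.
    rewrite !mx2_exp mx2_mul mx2_sub !(mul0r, mulr0, addr0, add0r, subr0, sub0r) /=.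
    rewrite mulrDr (mulrA xa a) Bz -addrA opprD addrA subrr add0r oppr0.
    by rewrite mulrBr mulNr !mulrA.
  apply: D_to_root => [n|].
    by rewrite Ediff mxnorm_mx2 !le_max lexx !orbT.
  apply: (@D_comb _ _ _ _ (nrm (xa * b) + 1) _ _ Da Dd).
    by rewrite addr_ge0.
  move=> n /=; rewrite Ediff mxnorm_mx2 nrmN nrm0 add0r !ge_max.
  set ra := nrm (a ^+ n - _); set rd := nrm (d ^+ n - _).
  have C1 : rd <= (nrm (xa * b) + 1) * rd.
    by rewrite mulrDl mul1r lerDr; apply: mulr_ge0; apply: n0.
  apply/and3P; split.
  - rewrite lerD2l; apply: (le_trans (nM _ _)).
    by rewrite mulrDl mul1r lerDl; apply: n0.
  - by apply: (le_trans C1); rewrite lerDr; apply: n0.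
  - apply: addr_ge0; first by apply: n0.
    apply: mulr_ge0; last by apply: n0.
    by apply: addr_ge0; [apply: n0|].
Qed.
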